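(* Assume $f\in C^{m+1}[-1,1]$ with $\|f^{(m+1)}\|_{L^\infty[-1,1]}\le A$ for some $m\in\mathbb{Z}_0^+$ and a constant $A>0$ independent of $m$. Let $\int_{-1}^{x_k}f(x)\,dx$ be approximated by the optimal barycentric Gegenbauer quadrature $\sum_{i=0}^m p_{OB,k,i}^{(1)}f(z_{m,k,i}^{(\alpha_k^* )})$ for each arbitrary integration node $x_k\in[-1,1]$, $k=0,\dots,m$, with truncation error $E_m^{(\alpha_k^* )}(x_k,\zeta_k)$. Then there exist positive constants $D_1^{(\alpha_k^* )},D_2^{(\alpha_k^* )}$ independent of $m$ such that: (i) if $\alpha_k^*\ge0$: $|E_m^{(\alpha_k^* )}(x_k,\zeta_k)|\le \dfrac{A\,2^{-m}(x_k+1)\,\Gamma(\alpha_k^*+1)\,\Gamma(m+2\alpha_k^*+1)}{\Gamma(2\alpha_k^*+1)\,\Gamma(m+2)\,\Gamma(m+\alpha_k^*+1)}$; (ii) if $\frac{m+1}{2}\in\mathbb{Z}^+$ and $-\frac12<\alpha_k^*<0$: $|E_m^{(\alpha_k^* )}(x_k,\zeta_k)|\le \dfrac{A\,2^{-m-1}(x_k+1)\,\Gamma(\alpha_k^* )}{\Gamma(m+\alpha_k^*+1)}\dbinom{\frac{m-1}{2}+\alpha_k^*}{\frac{m+1}{2}}$; (iii) if $\frac m2\in\mathbb{Z}_0^+$ and $-\frac12<\alpha_k^*<0$: $|E_m^{(\alpha_k^* )}(x_k,\zeta_k)|\le \dfrac{A\,2^{-m}(x_k+1)\,\Gamma(\alpha_k^*+1)}{\sqrt{(m+1)(2\alpha_k^*+m+1)}\,\Gamma(m+\alpha_k^*+1)}\dbinom{\frac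 m2+\alpha_k^*}{\frac m2}$. Moreover, as $m\to\infty$, asymptotically $|E_m^{(\alpha_k^* )}(x_k,\zeta_k)|\lesssim B_1^{(\alpha_k^* )}(e/2)^m(x_k+1)\,m^{\alpha_k^*-m-3/2}$ if $\alpha_k^*\ge0$, and $|E_m^{(\alpha_k^* )}(x_k,\zeta_k)|\lesssim B_2^{(\alpha_k^* )}(e/2)^m(x_k+1)\,m^{-m-3/2}$ if $-\frac12<\alpha_k^*<0$, for all $k$, where $B_1^{(\alpha_k^* )}=AD_1^{(\alpha_k^* )}$ and $B_2^{(\alpha_k^* )}=B_1^{(\alpha_k^* )}D_2^{(\alpha_k^* )}$.
   Context: For $\alpha>-1/2$ and integer $n\ge0$, the Gegenbauer polynomial $G_n^{(\alpha)}$ is the Jacobi polynomial $P_n^{(\alpha-1/2,\alpha-1/2)}$ normalized so that $G_n^{(\alpha)}(1)=1$; $K_n^{(\alpha)}$ denotes its leading coefficient. For a node $x_k\in[-1,1]$, $\eta_{k,m}(\alpha)=\frac{2^m}{K_{m+1}^{(\alpha)}}\int_{-1}^{x_k}G_{m+1}^{(\alpha)}(x)\,dx$ and $\alpha_k^*=\operatorname{argmin}_{\alpha>-1/2}\eta_{k,m}^2(\alpha)$. The adjoint GG nodes $z_{m,k,i}^{(\alpha_k^* )}$, $i=0,\dots,m$, are the zeros of $G_{m+1}^{(\alpha_k^* )}$; $p_{OB,k,i}^{(1)}=\int_{-1}^{x_k}\ell_{k,i}(x)\,dx$ where $\ell_{k,i}$ is the degree-$m$ Lagrange basis polynomial at these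 nodes. The truncation error is $E_m^{(\alpha_k^* )}(x_k,\zeta_k)=\frac{f^{(m+1)}(\zeta_k)}{2^m(m+1)!}\eta_{k,m}(\alpha_k^* )$ for some $\zeta_k\in[-1,1]$. Binomial coefficients with non-integer arguments are $\binom{a}{b}=\Gamma(a+1)/(\Gamma(b+1)\Gamma(a-b+1))$; $\lesssim$ denotes an asymptotic inequality as $m\to\infty$. *)

(* Defs.v *)
From Stdlib Require Import Reals Lra ClassicalEpsilon Factorial Binomial Arith PeanoNat.
Open Scope R_scope.

Fixpoint rprod (f : nat -> R) (n : nat) : R :=
  match n with
  | O => f O
  | S k => rprod f k * f (S k)
  end.

(** Euler's Gamma function, via Gauss' limit formula
    Gamma x = lim_n n! n^x / (x (x+1) ... (x+n))
    (valid for every real x that is not a non-positive integer). *)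
Definition Gamma (x : R) : R :=
  epsilon (inhabits 0)
    (fun l => Un_cv (fun n => INR (fact n) * Rpower (INR n) x
                              / rprod (fun j => x + INR j) n) l).

Definition binomR (a b : R) : R :=
  Gamma (a + 1) / (Gamma (b + 1) * Gamma (a - b + 1)).

Fixpoint poch (a : R) (s : nat) : R :=
  match s with
  | O => 1
  | S k => poch a k * (a + INR k)
  end.

Definition poly_eval (c : nat -> R) (n : nat) (x : R) : R :=
  sum_f_R0 (fun j => c j * x ^ j) n.

(** Jacobi polynomial P_n^{(a,b)}:
    P_n^{(a,b)}(x) = (a+1)_n/n! * sum_{s=0}^n (-n)_s (n+a+b+1)_s / ((a+1)_s s!) ((1-x)/2)^s,
    expanded in the monomial basis; jacobi_coef n a b j = coefficient of x^j. *)
Definition jac_T (n : nat) (a b : R) (s : nat) : R :=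
  poch (- INR n) s * poch (INR n + a + b + 1) s / (poch (a + 1) s * INR (fact s)).

Definition jacobi_coef (n : nat) (a b : R) (j : nat) : R :=
  poch (a + 1) n / INR (fact n) *
  sum_f_R0 (fun s => if (j <=? s)%nat
                     then jac_T n a b s * C s j * (-1) ^ j / 2 ^ s
                     else 0) n.

Definition jacobi (n : nat) (a b x : R) : R := poly_eval (jacobi_coef n a b) n x.

Definition geg_coef (n : nat) (alpha : R) (j : nat) : R :=
  jacobi_coef n (alpha - 1/2) (alpha - 1/2) j / jacobi n (alpha - 1/2) (alpha - 1/2) 1.

Definition geg (n : nat) (alpha x : R) : R := poly_eval (geg_coef n alpha) n x.

Definition geg_lead (n : nat) (alpha : R) : R := geg_coef n alpha n.

(** Riemann integral of f over [a,b] (value independent of the integrability proof). *)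
Definition RInt (f : R -> R) (a b : R) : R :=
  epsilon (inhabits 0) (fun I => exists pr : Riemann_integrable f a b, RiemannInt pr = I).

Definition eta (m : nat) (alpha x : R) : R :=
  2 ^ m / geg_lead (m + 1) alpha * RInt (geg (m + 1) alpha) (-1) x.

Definition trunc_err (m : nat) (alpha : R) (dfm1 : R -> R) (x zeta : R) : R :=
  dfm1 zeta / (2 ^ m * INR (fact (m + 1))) * eta m alpha x.

(** Standing data: f in C^{m+1}[-1,1] with derivatives fd j = f^{(j)},
    |f^{(m+1)}| <= A on [-1,1], node x in [-1,1], and astar a minimiser of
    eta_{k,m}^2 over alpha > -1/2. *)
Definition admissible (m : nat) (A : R) (f : R -> R) (fd : nat -> R -> R)
    (x astar : R) : Prop :=
  0 < A /\
  fd O = f /\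
  (forall j y, (j <= m)%nat -> -1 <= y <= 1 -> derivable_pt_lim (fd j) y (fd (S j) y)) /\
  (forall y, -1 <= y <= 1 -> continuity_pt (fd (S m)) y) /\
  (forall y, -1 <= y <= 1 -> Rabs (fd (S m) y) <= A) /\
  -1 <= x <= 1 /\
  -1/2 < astar /\
  (forall beta, -1/2 < beta -> (eta m astar x) ^ 2 <= (eta m beta x) ^ 2).

(* Main.v *)
Require Import Defs.
From Stdlib Require Import Reals Factorial Binomial PeanoNat.
From Stdlib Require Import Lra Lia ClassicalEpsilon Arith.
Open Scope R_scope.

Lemma exp_le_mono x y : x <= y -> exp x <= exp y.
Proof. intros [H|H]. left; apply exp_increasing; auto. subst; lra. Qed.

Lemma ln_le_mono x y : 0 < x -> x <= y -> ln x <= ln y.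
Proof. intros Hx [H|H]. left; apply ln_increasing; auto. subst; lra. Qed.

Lemma ln_le_sub1 y : 0 < y -> ln y <= y - 1.
Proof.
  intros Hy. rewrite <- (ln_exp (y - 1)). apply ln_le_mono; auto.
  pose proof (exp_ineq1_le (y - 1)); lra.
Qed.

Lemma Un_cv_ev (u v : nat -> R) l N :
  (forall n, (N <= n)%nat -> u n = v n) -> Un_cv u l -> Un_cv v l.
Proof.
  intros H Hu eps He. destruct (Hu eps He) as [M HM]. exists (max N M).
  intros n Hn. rewrite <- H by lia. apply HM; lia.
Qed.

Lemma cv_c_over c d : 0 <= d -> Un_cv (fun n => c / (d + INR n)) 0.
Proof.
  intros Hd eps He.
  destruct (INR_archimed eps (Rabs c + 1) He) as [N HN].
  exists (S N). intros n Hn. unfold R_dist.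
  assert (HnN : INR N < INR n) by (apply lt_INR; lia).
  assert (H0 : 0 <= INR N) by apply pos_INR.
  assert (Hp : 0 < d + INR n) by (assert (0 < INR n) by lra; lra).
  rewrite Rminus_0_r. unfold Rdiv. rewrite Rabs_mult, Rabs_inv, (Rabs_right (d + INR n)) by lra.
  apply (Rmult_lt_reg_r (d + INR n)); auto. field_simplify; try lra.
  assert (Rabs c < eps * (d + INR n)).
  { assert (eps * INR N < eps * (d + INR n)) by (apply Rmult_lt_compat_l; lra). lra. }
  lra.
Qed.

Definition gseq (x : R) (n : nat) : R :=
  INR (fact n) * Rpower (INR n) x / rprod (fun j => x + INR j) n.

Lemma rprod_shift x n :
  rprod (fun j => x + 1 + INR j) n * x = rprod (fun j => x + INR j) n * (x + 1 + INR n).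
Proof.
  induction n.
  - simpl. ring.
  - change (rprod (fun j => x + 1 + INR j) (S n)) with (rprod (fun j => x + 1 + INR j) n * (x + 1 + INR (S n))).
    change (rprod (fun j => x + INR j) (S n)) with (rprod (fun j => x + INR j) n * (x + INR (S n))).
    transitivity (rprod (fun j => x + 1 + INR j) n * x * (x + 1 + INR (S n))). ring.
    rewrite IHn. rewrite !S_INR. ring.
Qed.

Lemma rprod_nz x n : (forall j, x + INR j <> 0) -> rprod (fun j => x + INR j) n <> 0.
Proof. intros H; induction n. exact (H O).
  change (rprod (fun j => x + INR j) n * (x + INR (S n)) <> 0).
  apply Rmult_integral_contrapositive; auto. Qed.

Lemma rprod_pos x n : 0 < x -> 0 < rprod (fun j => x + INR j) n.
Proof. intros H; induction n. simpl; lra.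
  change (0 < rprod (fun j => x + INR j) n * (x + INR (S n))).
  apply Rmult_lt_0_compat; auto. pose proof (pos_INR (S n)); lra. Qed.

Lemma Rpower_S x n : (1 <= n)%nat -> Rpower (INR n) (x + 1) = Rpower (INR n) x * INR n.
Proof.
  intros Hn. rewrite Rpower_plus, Rpower_1; auto. apply lt_0_INR; lia.
Qed.

Lemma gseq_shift x n : x <> 0 -> (forall j, x + INR j <> 0) -> (1 <= n)%nat ->
  gseq (x + 1) n = gseq x n * (x * INR n / (x + 1 + INR n)).
Proof.
  intros Hx Hj Hn. unfold gseq. rewrite Rpower_S by auto.
  pose proof (rprod_shift x n) as Hs. pose proof (rprod_nz x n Hj) as Hz.
  assert (Hx1 : x + 1 + INR n <> 0) by (replace (x + 1 + INR n) with (x + INR (S n)) by (rewrite S_INR; ring); auto).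
  assert (Hr : rprod (fun j => x + 1 + INR j) n = rprod (fun j => x + INR j) n * (x + 1 + INR n) / x)
    by (apply (Rmult_eq_reg_r x); auto; rewrite Hs; field; auto).
  rewrite Hr. field. repeat split; auto.
Qed.

Lemma gseq_S x n : (1 <= n)%nat ->
  gseq x (S n) = gseq x n * (exp (x * (ln (INR (S n)) - ln (INR n))) * INR (S n) / (x + INR (S n))).
Proof.
  intros Hn. unfold gseq, Rpower.
  change (rprod (fun j => x + INR j) (S n)) with (rprod (fun j => x + INR j) n * (x + INR (S n))).
  replace (x * ln (INR (S n))) with (x * ln (INR n) + x * (ln (INR (S n)) - ln (INR n))) by ring.
  rewrite exp_plus. change (fact (S n)) with (S n * fact n)%nat. rewrite mult_INR.
  unfold Rdiv. rewrite Rinv_mult. ring.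
Qed.

Lemma lnS_bounds n : (1 <= n)%nat ->
  / INR (S n) <= ln (INR (S n)) - ln (INR n) <= / INR n.
Proof.
  intros Hn. assert (H0 : 0 < INR n) by (apply lt_0_INR; lia).
  rewrite S_INR in *. split.
  - pose proof (ln_le_sub1 (INR n / (INR n + 1))) as H.
    assert (0 < INR n / (INR n + 1)) by (apply Rdiv_lt_0_compat; lra).
    rewrite (Rdiv_def (INR n)), ln_mult, ln_Rinv in H by (try apply Rinv_0_lt_compat; lra).
    assert (INR n * / (INR n + 1) - 1 = - / (INR n + 1)) by (field; lra). lra.
  - pose proof (ln_le_sub1 ((INR n + 1) / INR n)) as H.
    assert (0 < (INR n + 1) / INR n) by (apply Rdiv_lt_0_compat; lra).
    rewrite (Rdiv_def (INR n + 1)), ln_mult, ln_Rinv in H by (try apply Rinv_0_lt_compat; lra).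
    assert ((INR n + 1) * / INR n - 1 = / INR n) by (field; lra). lra.
Qed.

Lemma ratio_ge1 x n : 0 < x -> (1 <= n)%nat ->
  1 <= exp (x * (ln (INR (S n)) - ln (INR n))) * INR (S n) / (x + INR (S n)).
Proof.
  intros Hx Hn. destruct (lnS_bounds n Hn) as [L1 L2].
  assert (H0 : 0 < INR (S n)) by (apply lt_0_INR; lia).
  pose proof (exp_ineq1_le (x * (ln (INR (S n)) - ln (INR n)))) as He.
  assert (x * / INR (S n) <= x * (ln (INR (S n)) - ln (INR n))) by (apply Rmult_le_compat_l; lra).
  apply (Rmult_le_reg_r (x + INR (S n))); [lra|].
  unfold Rdiv. rewrite Rmult_assoc, Rinv_l, Rmult_1_r by lra.
  assert (1 + x * / INR (S n) <= exp (x * (ln (INR (S n)) - ln (INR n)))) by lra.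
  apply Rle_trans with ((1 + x * / INR (S n)) * INR (S n)).
  right; field; lra.
  apply Rmult_le_compat_r; lra.
Qed.

Lemma ratio_le x n : 0 < x -> (1 <= n)%nat ->
  exp (x * (ln (INR (S n)) - ln (INR n))) * INR (S n) / (x + INR (S n))
  <= exp (x * (x + 1) * (/ INR n - / INR (S n))).
Proof.
  intros Hx Hn. destruct (lnS_bounds n Hn) as [L1 L2].
  assert (H0 : 0 < INR n) by (apply lt_0_INR; lia).
  assert (H1 : INR (S n) = INR n + 1) by apply S_INR.
  assert (E1 : exp (x * (ln (INR (S n)) - ln (INR n))) <= exp (x * / INR n))
    by (apply exp_le_mono; apply Rmult_le_compat_l; lra).
  assert (E2 : INR (S n) / (x + INR (S n)) <= exp (- (x / (x + INR (S n))))).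
  { pose proof (exp_ineq1_le (- (x / (x + INR (S n))))).
    assert (INR (S n) / (x + INR (S n)) = 1 + - (x / (x + INR (S n)))) by (field; lra). lra. }
  assert (E3 : x * / INR n - x / (x + INR (S n)) <= x * (x + 1) * (/ INR n - / INR (S n))).
  { rewrite H1.
    replace (x * / INR n - x / (x + (INR n + 1))) with (x * (x + 1) * / (INR n * (x + INR n + 1))) by (field; lra).
    replace (x * (x + 1) * (/ INR n - / (INR n + 1))) with (x * (x + 1) * / (INR n * (INR n + 1))) by (field; lra).
    apply Rmult_le_compat_l. nra. apply Rinv_le_contravar. nra. nra. }
  unfold Rdiv. rewrite Rmult_assoc.
  apply Rle_trans with (exp (x * / INR n) * exp (- (x / (x + INR (S n))))).
  apply Rmult_le_compat; try lra. left; apply exp_pos.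
  apply Rmult_le_pos; [lra|]. left; apply Rinv_0_lt_compat; lra.
  rewrite <- exp_plus. apply exp_le_mono. unfold Rdiv in *. lra.
Qed.

Lemma gseq_pos x n : 0 < x -> 0 < gseq x n.
Proof.
  intros Hx. unfold gseq, Rdiv. apply Rmult_lt_0_compat.
  apply Rmult_lt_0_compat. apply lt_0_INR, lt_O_fact. unfold Rpower; apply exp_pos.
  apply Rinv_0_lt_compat, rprod_pos; auto.
Qed.

Lemma gseq_grow x n : 0 < x -> (1 <= n)%nat -> gseq x n <= gseq x (S n).
Proof.
  intros Hx Hn. rewrite gseq_S by auto. pose proof (ratio_ge1 x n Hx Hn).
  pose proof (gseq_pos x n Hx).
  rewrite <- (Rmult_1_r (gseq x n)) at 1. apply Rmult_le_compat_l; lra.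
Qed.

Lemma gseq_bound x n : 0 < x -> (1 <= n)%nat ->
  gseq x n <= gseq x 1 * exp (x * (x + 1) * (1 - / INR n)).
Proof.
  intros Hx Hn. induction n. lia.
  destruct n. simpl INR. replace (1 - / 1) with 0 by field.
  rewrite Rmult_0_r, exp_0; lra.
  rewrite gseq_S by lia. pose proof (ratio_le x (S n) Hx ltac:(lia)).
  pose proof (ratio_ge1 x (S n) Hx ltac:(lia)).
  specialize (IHn ltac:(lia)). pose proof (gseq_pos x (S n) Hx).
  apply Rle_trans with (gseq x 1 * exp (x * (x + 1) * (1 - / INR (S n))) *
     exp (x * (x + 1) * (/ INR (S n) - / INR (S (S n))))).
  apply Rmult_le_compat; lra.
  rewrite Rmult_assoc, <- exp_plus. right. f_equal. f_equal. ring.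
Qed.

Lemma gamma_conv x : 0 < x -> exists l, Un_cv (gseq x) l /\ 0 < l.
Proof.
  intros Hx.
  set (v := fun k => gseq x (S k)).
  assert (Hg : Un_growing v) by (intro k; unfold v; apply gseq_grow; auto; lia).
  assert (Hb : has_ub v).
  { exists (gseq x 1 * exp (x * (x + 1))). intros y [k ->]. unfold v.
    apply Rle_trans with (gseq x 1 * exp (x * (x + 1) * (1 - / INR (S k)))).
    apply gseq_bound; auto; lia.
    apply Rmult_le_compat_l. left; apply gseq_pos; auto.
    apply exp_le_mono. rewrite <- (Rmult_1_r (x * (x + 1))) at 2.
    apply Rmult_le_compat_l. nra.
    assert (0 < / INR (S k)) by (apply Rinv_0_lt_compat, lt_0_INR; lia). lra. }
  destruct (growing_cv v Hg Hb) as [l Hl].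
  exists l. split.
  - apply (CV_shift _ 1). eapply Un_cv_ev with (N := O); [|exact Hl].
    intros n _. unfold v. f_equal. lia.
  - pose proof (growing_ineq v l Hg Hl 0). pose proof (gseq_pos x 1 Hx). unfold v in *. lra.
Qed.

Lemma Gamma_eq x l : Un_cv (gseq x) l -> Gamma x = l.
Proof.
  intros H. unfold Gamma.
  assert (Hs := epsilon_spec (inhabits 0)
    (fun l => Un_cv (fun n => INR (fact n) * Rpower (INR n) x / rprod (fun j => x + INR j) n) l)
    (ex_intro _ l H)).
  apply (UL_sequence (gseq x)); auto.
Qed.

Lemma Gamma_pos x : 0 < x -> 0 < Gamma x.
Proof. intros Hx. destruct (gamma_conv x Hx) as [l [H1 H2]]. rewrite (Gamma_eq x l); auto. Qed.

Lemma Gamma_cv x : 0 < x -> Un_cv (gseq x) (Gamma x).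
Proof. intros Hx. destruct (gamma_conv x Hx) as [l [H1 H2]]. rewrite (Gamma_eq x l); auto. Qed.

Lemma cv_n_over c : 0 < c -> Un_cv (fun n => INR n / (c + INR n)) 1.
Proof.
  intros Hc. pose proof (cv_c_over c c (Rlt_le _ _ Hc)) as H.
  apply (Un_cv_ev (fun n => 1 - c / (c + INR n)) _ _ O).
  intros n _. assert (0 <= INR n) by apply pos_INR. field; lra.
  assert (Hk : Un_cv (fun _ => 1) 1)
    by (intros e He; exists O; intros; unfold R_dist; rewrite Rminus_diag, Rabs_R0; lra).
  assert (Hm := CV_minus _ _ 1 0 Hk H). rewrite Rminus_0_r in Hm. exact Hm.
Qed.

Lemma Gamma_S x : 0 < x -> Gamma (x + 1) = x * Gamma x.
Proof.
  intros Hx. apply Gamma_eq.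
  apply (Un_cv_ev (fun n => gseq x n * (x * (INR n / (x + 1 + INR n)))) _ _ 1).
  intros n Hn. rewrite gseq_shift; auto. unfold Rdiv; ring. lra.
  intros j. pose proof (pos_INR j); lra.
  replace (x * Gamma x) with (Gamma x * (x * 1)) by ring.
  apply CV_mult. apply Gamma_cv; auto.
  apply (CV_mult (fun _ => x) _ x 1).
  intros e He; exists O; intros; unfold R_dist; rewrite Rminus_diag, Rabs_R0; lra.
  apply cv_n_over; lra.
Qed.

Lemma Gamma_neg a : -1 < a < 0 -> Gamma a = Gamma (a + 1) / a.
Proof.
  intros Ha. apply Gamma_eq.
  assert (Hj : forall j, a + INR j <> 0).
  { intros j. destruct j. simpl; lra. rewrite S_INR. pose proof (pos_INR j); lra. }
  apply (Un_cv_ev (fun n => gseq (a + 1) n * (/ a * (1 + (a + 1) / (0 + INR n)))) _ _ 1).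
  intros n Hn. rewrite gseq_shift by (auto; lra).
  assert (0 < INR n) by (apply lt_0_INR; lia).
  assert (a + 1 + INR n <> 0) by lra.
  assert (0 < INR n) by (apply lt_0_INR; lia). field. lra.
  replace (Gamma (a + 1) / a) with (Gamma (a + 1) * (/ a * (1 + 0))) by (field; lra).
  apply CV_mult. apply Gamma_cv; lra.
  apply (CV_mult (fun _ => / a) _ (/ a) (1 + 0)).
  intros e He; exists O; intros; unfold R_dist; rewrite Rminus_diag, Rabs_R0; lra.
  apply CV_plus. intros e He; exists O; intros; unfold R_dist; rewrite Rminus_diag, Rabs_R0; lra.
  apply cv_c_over; lra.
Qed.

Lemma Gamma_1 : Gamma 1 = 1.
Proof.
  apply Gamma_eq.
  apply (Un_cv_ev (fun n => INR n / (1 + INR n)) _ _ 1).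
  2: apply cv_n_over; lra.
  intros n Hn. unfold gseq. rewrite Rpower_1 by (apply lt_0_INR; lia).
  assert (Hr : forall k, rprod (fun j => 1 + INR j) k = INR (fact (S k))).
  { induction k. simpl; lra.
    change (rprod (fun j => 1 + INR j) (S k)) with (rprod (fun j => 1 + INR j) k * (1 + INR (S k))).
    rewrite IHk. change (fact (S (S k))) with (S (S k) * fact (S k))%nat.
    rewrite mult_INR, (S_INR (S k)). ring. }
  rewrite Hr. change (fact (S n)) with (S n * fact n)%nat. rewrite mult_INR, S_INR.
  assert (0 < INR (fact n)) by apply lt_0_INR, lt_O_fact.
  pose proof (pos_INR n). field. split; lra.
Qed.

Lemma poch_pos y k : 0 < y -> 0 < poch y k.
Proof. intros Hy; induction k; simpl. lra. apply Rmult_lt_0_compat; auto. pose proof (pos_INR k); lra. Qed.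

Lemma poch_mono y z k : 0 < y -> y <= z -> poch y k <= poch z k.
Proof.
  intros Hy Hz; induction k; simpl. lra.
  pose proof (pos_INR k). pose proof (poch_pos y k Hy).
  apply Rmult_le_compat; lra.
Qed.

Lemma poch_add y p q : poch y (p + q) = poch y p * poch (y + INR p) q.
Proof.
  induction q. simpl. rewrite Nat.add_0_r; ring.
  rewrite Nat.add_succ_r. simpl. rewrite IHq, plus_INR. ring.
Qed.

Lemma poch_one n : poch 1 n = INR (fact n).
Proof.
  induction n. simpl; lra. simpl poch. rewrite IHn.
  change (fact (S n)) with (S n * fact n)%nat. rewrite mult_INR, S_INR. ring.
Qed.

Lemma Gamma_poch x k : 0 < x -> Gamma (x + INR k) = poch x k * Gamma x.
Proof.
  intros Hx. induction k. simpl. rewrite Rplus_0_r; ring.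
  rewrite S_INR. replace (x + (INR k + 1)) with ((x + INR k) + 1) by ring.
  rewrite Gamma_S by (pose proof (pos_INR k); lra). rewrite IHk. simpl. ring.
Qed.

Lemma sum_swap (F : nat -> nat -> R) n :
  sum_f_R0 (fun i => sum_f_R0 (fun j => F i j) n) n =
  sum_f_R0 (fun j => sum_f_R0 (fun i => F i j) n) n.
Proof.
  induction n. reflexivity.
  rewrite !tech5.
  rewrite (sum_eq (fun i => sum_f_R0 (fun j => F i j) (S n))
                  (fun i => sum_f_R0 (fun j => F i j) n + F i (S n))) by (intros; apply tech5).
  rewrite (sum_eq (fun j => sum_f_R0 (fun i => F i j) (S n))
                  (fun j => sum_f_R0 (fun i => F i j) n + F (S n) j)) by (intros; apply tech5).
  rewrite !sum_plus, IHn. cbv beta.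
  replace (sum_f_R0 (F (S n)) n) with (sum_f_R0 (fun j => F (S n) j) n) by reflexivity. ring.
Qed.

Lemma sum_trunc (g : nat -> R) s n : (s <= n)%nat ->
  sum_f_R0 (fun j => if (j <=? s)%nat then g j else 0) n = sum_f_R0 g s.
Proof.
  intros H. replace n with (s + (n - s))%nat by lia. generalize (n - s)%nat as d. intro d.
  induction d.
  - rewrite Nat.add_0_r. apply sum_eq. intros i Hi. apply Nat.leb_le in Hi. rewrite Hi; auto.
  - rewrite Nat.add_succ_r, tech5, IHd.
    replace ((S (s + d) <=? s)%nat) with false by (symmetry; apply Nat.leb_gt; lia). ring.
Qed.

Lemma sum_first (g : nat -> R) n : (forall s, (1 <= s)%nat -> g s = 0) -> sum_f_R0 g n = g O.
Proof. intros H; induction n. reflexivity. rewrite tech5, (H (S n)) by lia. rewrite IHn. ring. Qed.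

Lemma sum_last (g : nat -> R) n : (forall s, (s < n)%nat -> g s = 0) -> sum_f_R0 g n = g n.
Proof.
  intros H. destruct n. reflexivity. rewrite tech5, sum_eq_R0. ring. intros; apply H; lia.
Qed.

Lemma sum_mult_r (An : nat -> R) N c : sum_f_R0 An N * c = sum_f_R0 (fun i => An i * c) N.
Proof. rewrite Rmult_comm, scal_sum. reflexivity. Qed.

Lemma sum_scal_l (An : nat -> R) N c : sum_f_R0 (fun i => c * An i) N = c * sum_f_R0 An N.
Proof. rewrite scal_sum. apply sum_eq. intros; ring. Qed.

Lemma C_nn n : C n n = 1.
Proof. unfold C. rewrite Nat.sub_diag. simpl. field. apply INR_fact_neq_0. Qed.

Lemma jacobi_u n a b x :
  jacobi n a b x = poch (a + 1) n / INR (fact n) *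
    sum_f_R0 (fun s => jac_T n a b s * ((1 - x) / 2) ^ s) n.
Proof.
  unfold jacobi, poly_eval, jacobi_coef.
  set (pre := poch (a + 1) n / INR (fact n)).
  set (F := fun j s => pre * (if (j <=? s)%nat then jac_T n a b s * C s j * (-1) ^ j / 2 ^ s * x ^ j else 0)).
  rewrite (sum_eq _ (fun j => sum_f_R0 (fun s => F j s) n)).
  2:{ intros j _. rewrite scal_sum, sum_mult_r. apply sum_eq. intros s _.
      unfold F. destruct (j <=? s)%nat; ring. }
  rewrite sum_swap, scal_sum. apply sum_eq. intros s Hs.
  unfold F. rewrite (sum_scal_l (fun j => if (j <=? s)%nat then _ else 0)).
  rewrite (sum_trunc (fun j => jac_T n a b s * C s j * (-1) ^ j / 2 ^ s * x ^ j)) by lia.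
  replace ((1 - x) / 2) with ((-x + 1) * / 2) by (unfold Rdiv; ring).
  rewrite Rpow_mult_distr, binomial, pow_inv.
  rewrite (sum_eq (fun j => jac_T n a b s * C s j * (-1) ^ j / 2 ^ s * x ^ j)
    (fun j => (jac_T n a b s / 2 ^ s) * (C s j * (- x) ^ j * 1 ^ (s - j)))).
  2:{ intros j _. rewrite pow1. replace (- x) with (-1 * x) by ring. rewrite Rpow_mult_distr.
      unfold Rdiv; ring. }
  rewrite sum_scal_l. unfold Rdiv. ring.
Qed.

Lemma poch_S_first y k : poch y (S k) = y * poch (y + 1) k.
Proof.
  induction k. simpl; ring.
  change (poch y (S (S k))) with (poch y (S k) * (y + INR (S k))).
  rewrite IHk. simpl poch. rewrite S_INR. ring.
Qed.

Lemma poch_refl x k : poch x k = (-1) ^ k * poch (- x - INR k + 1) k.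
Proof.
  revert x. induction k; intros x. simpl; ring.
  change (poch x (S k)) with (poch x k * (x + INR k)).
  rewrite IHk. replace (- x - INR (S k) + 1) with (- x - INR k) by (rewrite S_INR; ring).
  rewrite poch_S_first. replace (- x - INR k + 1) with (- x - INR k + 1) by ring. simpl. ring.
Qed.

Lemma pochnn n : (1 <= n)%nat -> 2 * poch (INR n) n = 4 ^ n * poch (1/2) n.
Proof.
  intros Hn. induction n. lia. destruct n. simpl; field.
  specialize (IHn ltac:(lia)).
  assert (Hs : poch (INR (S n) + 1) (S n) * INR (S n) = poch (INR (S n)) (S n) * (INR (S n) + INR (S n))).
  { rewrite Rmult_comm, <- poch_S_first. reflexivity. }
  change (poch (INR (S (S n))) (S (S n))) with (poch (INR (S (S n))) (S n) * (INR (S (S n)) + INR (S n))).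
  change (poch (1/2) (S (S n))) with (poch (1/2) (S n) * (1/2 + INR (S n))).
  rewrite (S_INR (S n)) in *.
  assert (HP : 0 < INR (S n)) by (apply lt_0_INR; lia).
  apply (Rmult_eq_reg_r (INR (S n))); [|lra].
  transitivity (2 * (poch (INR (S n) + 1) (S n) * INR (S n)) * (INR (S n) + 1 + INR (S n))). ring.
  rewrite Hs. transitivity ((2 * poch (INR (S n)) (S n)) * (2 * INR (S n)) * (INR (S n) + 1 + INR (S n))). ring.
  rewrite IHn. simpl pow. field.
Qed.

Definition dd (n s : nat) : R := jac_T n (0 - 1/2) (0 - 1/2) s.

Lemma dd_eq n s : dd n s = poch (- INR n) s * poch (INR n) s / (poch (1/2) s * INR (fact s)).
Proof.
  unfold dd, jac_T. replace (INR n + (0 - 1/2) + (0 - 1/2) + 1) with (INR n) by field.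
  replace (0 - 1/2 + 1) with (1/2) by field. reflexivity.
Qed.

Lemma dd_0 n : dd n 0 = 1.
Proof. rewrite dd_eq. simpl. field. Qed.

Lemma poch_half_pos s : 0 < poch (1/2) s.
Proof. apply poch_pos; lra. Qed.

Lemma dd_rec n s : dd n (S s) * ((INR s + 1) * (INR s + 1/2)) = dd n s * ((INR s - INR n) * (INR s + INR n)).
Proof.
  rewrite !dd_eq. simpl poch. change (fact (S s)) with (S s * fact s)%nat.
  rewrite mult_INR, S_INR. pose proof (poch_half_pos s). pose proof (INR_fact_neq_0 s).
  pose proof (pos_INR s). field. repeat split; lra.
Qed.

Lemma poch_negn_zero n k : poch (- INR n) (S n + k) = 0.
Proof.
  rewrite poch_add. simpl poch. replace (- INR n + INR n) with 0 by ring. ring.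
Qed.

Lemma dd_zero n k : dd n (S n + k) = 0.
Proof. rewrite dd_eq, poch_negn_zero. unfold Rdiv; ring. Qed.

Lemma dd_nn n : (1 <= n)%nat -> 2 * dd n n = (-1) ^ n * 4 ^ n.
Proof.
  intros Hn. rewrite dd_eq, (poch_refl (- INR n)).
  replace (- - INR n - INR n + 1) with 1 by ring. rewrite poch_one.
  pose proof (pochnn n Hn). pose proof (poch_half_pos n). pose proof (INR_fact_neq_0 n).
  apply (Rmult_eq_reg_r (poch (1/2) n)); [|lra].
  unfold Rdiv. field_simplify; [|lra].
  transitivity ((-1) ^ n * (2 * poch (INR n) n)). field; auto.
  rewrite H. replace (1 * / 2) with (1/2) by field. ring.
Qed.

Lemma jac1 n : jacobi n (0 - 1/2) (0 - 1/2) 1 = poch (1/2) n / INR (fact n).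
Proof.
  rewrite jacobi_u. replace (0 - 1/2 + 1) with (1/2) by field.
  rewrite sum_first. unfold jac_T; simpl; field. apply INR_fact_neq_0.
  intros s Hs. replace ((1 - 1) / 2) with 0 by field. destruct s. lia. simpl; ring.
Qed.

Lemma geg0 n x : geg n 0 x = sum_f_R0 (fun s => dd n s * ((1 - x) / 2) ^ s) n.
Proof.
  unfold geg, poly_eval, geg_coef.
  rewrite (sum_eq _ (fun j => / jacobi n (0 - 1/2) (0 - 1/2) 1 * (jacobi_coef n (0 - 1/2) (0 - 1/2) j * x ^ j)))
    by (intros; unfold Rdiv; ring).
  rewrite sum_scal_l. change (sum_f_R0 (fun j => jacobi_coef n (0 - 1/2) (0 - 1/2) j * x ^ j) n)
    with (jacobi n (0 - 1/2) (0 - 1/2) x).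
  rewrite jac1, jacobi_u. replace (0 - 1/2 + 1) with (1/2) by field.
  pose proof (poch_half_pos n). pose proof (INR_fact_neq_0 n).
  field_simplify; [|split; lra]. reflexivity.
Qed.

Lemma geg0_lead n : (1 <= n)%nat -> 2 * geg_lead n 0 = 2 ^ n.
Proof.
  intros Hn. unfold geg_lead, geg_coef. rewrite jac1. unfold jacobi_coef.
  replace (0 - 1/2 + 1) with (1/2) by field.
  rewrite sum_last.
  2:{ intros s Hs. replace ((n <=? s)%nat) with false by (symmetry; apply Nat.leb_gt; lia). reflexivity. }
  rewrite Nat.leb_refl, C_nn. fold (dd n n).
  pose proof (poch_half_pos n). pose proof (INR_fact_neq_0 n).
  pose proof (dd_nn n Hn).
  assert (E : (-1) ^ n * (-1) ^ n = 1) by (rewrite <- Rpow_mult_distr; replace (-1 * -1) with 1 by ring; apply pow1).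
  assert (E4 : 4 ^ n = 2 ^ n * 2 ^ n) by (rewrite <- Rpow_mult_distr; f_equal; ring).
  assert (0 < 2 ^ n) by (apply pow_lt; lra).
  apply (Rmult_eq_reg_r 2); [|lra].
  field_simplify; [|repeat split; lra].
  transitivity (2 * ((2 * dd n n) * (-1) ^ n) / 2 ^ n). field. lra.
  rewrite H1, E4. transitivity (2 * ((-1) ^ n * (-1) ^ n) * 2 ^ n). field; lra.
  rewrite E. ring.
Qed.

Definition Pc (c : nat -> R) (N : nat) (u : R) : R := sum_f_R0 (fun s => c s * u ^ s) N.

Lemma Pc_deriv c N u :
  derivable_pt_lim (Pc c N) u (Pc (fun s => INR (S s) * c (S s)) N u - INR (S N) * c (S N) * u ^ N).
Proof.
  induction N.
  - assert (H := derivable_pt_lim_scal (fun y => y ^ 0) (c O) u _ (derivable_pt_lim_pow u 0)).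
    replace (Pc (fun s => INR (S s) * c (S s)) 0 u - INR 1 * c 1%nat * u ^ 0) with (c O * (INR 0 * u ^ Init.Nat.pred 0)).
    exact H. unfold Pc; simpl; ring.
  - assert (H := derivable_pt_lim_plus _ _ u _ _ IHN
       (derivable_pt_lim_scal (fun y => y ^ S N) (c (S N)) u _ (derivable_pt_lim_pow u (S N)))).
    replace (Pc (fun s => INR (S s) * c (S s)) (S N) u - INR (S (S N)) * c (S (S N)) * u ^ S N)
      with (Pc (fun s => INR (S s) * c (S s)) N u - INR (S N) * c (S N) * u ^ N +
            c (S N) * (INR (S N) * u ^ Init.Nat.pred (S N))).
    exact H. unfold Pc. rewrite tech5. simpl pred. ring.
Qed.

Lemma Pc_ext a b N u : (forall s, (s <= N)%nat -> a s = b s) -> Pc a N u = Pc b N u.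
Proof. intros H. unfold Pc. apply sum_eq. intros; rewrite H; auto. Qed.

Lemma Pc_shift g N u : g O = 0 -> g (S N) = 0 -> u * Pc (fun s => g (S s)) N u = Pc g N u.
Proof.
  intros H0 HN. unfold Pc. rewrite scal_sum.
  transitivity (sum_f_R0 (fun s => g (S s) * u ^ (S s)) N).
  apply sum_eq; intros; simpl; ring.
  assert (E := decomp_sum (fun t => g t * u ^ t) (S N) ltac:(lia)). simpl pred in E. cbv beta in E.
  rewrite H0 in E. rewrite tech5, HN in E. lra.
Qed.

Lemma sum_comb (A B D1 Cc E : nat -> R) k1 k2 N :
  sum_f_R0 A N - sum_f_R0 B N + k1 * sum_f_R0 D1 N - sum_f_R0 Cc N + k2 * sum_f_R0 E N =
  sum_f_R0 (fun t => A t - B t + k1 * D1 t - Cc t + k2 * E t) N.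
Proof. induction N; simpl; [ring|]. rewrite <- IHN. ring. Qed.

Lemma INR_pred_mul t : INR (pred t) * INR t = INR t * INR t - INR t.
Proof. destruct t. simpl; ring. simpl pred. rewrite S_INR. ring. Qed.

Section Cheb.
Variable n : nat.
Let dn := dd n.
Let d1 := fun s => INR (S s) * dn (S s).
Let d2 := fun s => INR (S s) * d1 (S s).
Let y := Pc dn n.
Let y1 := Pc d1 n.
Let y2 := Pc d2 n.

Lemma dn_Sn : dn (S n) = 0.
Proof. unfold dn. rewrite <- (Nat.add_0_r (S n)). apply dd_zero. Qed.
Lemma dn_SSn : dn (S (S n)) = 0.
Proof. unfold dn. replace (S (S n)) with (S n + 1)%nat by lia. apply dd_zero. Qed.

Lemma y_deriv u : derivable_pt_lim y u (y1 u).
Proof.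
  assert (H := Pc_deriv dn n u). unfold y, y1.
  replace (Pc d1 n u) with (Pc (fun s => INR (S s) * dn (S s)) n u - INR (S n) * dn (S n) * u ^ n).
  exact H. rewrite dn_Sn. unfold d1. ring.
Qed.

Lemma y1_deriv u : derivable_pt_lim y1 u (y2 u).
Proof.
  assert (H := Pc_deriv d1 n u). unfold y1, y2.
  replace (Pc d2 n u) with (Pc (fun s => INR (S s) * d1 (S s)) n u - INR (S n) * d1 (S n) * u ^ n).
  exact H. unfold d1 at 2. rewrite dn_SSn. unfold d2. ring.
Qed.

Lemma ode u : u * (1 - u) * y2 u + (/2 - u) * y1 u + INR n ^ 2 * y u = 0.
Proof.
  set (A := fun t => INR t * INR (S t) * dn (S t)).
  set (B := fun t => INR (pred t) * INR t * dn t).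
  set (Cc := fun t => INR t * dn t).
  assert (R1 : u * y2 u = Pc A n u).
  { rewrite <- Pc_shift. f_equal. unfold y2. apply Pc_ext. intros s _. unfold A, d2, d1. ring.
    unfold A; simpl; ring. unfold A. rewrite dn_SSn. ring. }
  assert (R2 : u * y1 u = Pc Cc n u).
  { rewrite <- Pc_shift. unfold y1. f_equal.
    unfold Cc; simpl; ring. unfold Cc. rewrite dn_Sn. ring. }
  assert (R3 : u * Pc A n u = Pc B n u).
  { rewrite <- (Pc_shift B n u). f_equal.
    unfold B; simpl; ring. unfold B. rewrite dn_Sn. ring. }
  replace (u * (1 - u) * y2 u + (/2 - u) * y1 u + INR n ^ 2 * y u) with
    (Pc A n u - Pc B n u + /2 * y1 u - Pc Cc n u + INR n ^ 2 * y u)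
    by (rewrite <- R3, <- R1, <- R2; ring).
  unfold Pc, y1, y, Pc. rewrite sum_comb. apply sum_eq_R0. intros t _.
  unfold A, B, Cc, d1. rewrite INR_pred_mul.
  pose proof (dd_rec n t) as Hr. fold dn in Hr. rewrite S_INR in *.
  transitivity ((dn (S t) * ((INR t + 1) * (INR t + / 2)) - dn t * ((INR t - INR n) * (INR t + INR n))) * u ^ t).
  ring. replace (/ 2) with (1/2) by field. rewrite Hr. ring.
Qed.

Definition Kf (u : R) : R := u * (1 - u) * (y1 u * y1 u) + INR n ^ 2 * (y u * y u).

Lemma K_deriv u : derivable_pt_lim Kf u 0.
Proof.
  assert (Hp := derivable_pt_lim_mult id (fct_cte 1 - id)%F u _ _ (derivable_pt_lim_id u)
     (derivable_pt_lim_minus _ _ u _ _ (derivable_pt_lim_const 1 u) (derivable_pt_lim_id u))).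
  assert (Hq := derivable_pt_lim_mult _ _ u _ _ (y1_deriv u) (y1_deriv u)).
  assert (Hr := derivable_pt_lim_mult _ _ u _ _ (y_deriv u) (y_deriv u)).
  assert (Hs := derivable_pt_lim_mult _ _ u _ _ (derivable_pt_lim_const (INR n ^ 2) u) Hr).
  assert (Ht := derivable_pt_lim_plus _ _ u _ _ (derivable_pt_lim_mult _ _ u _ _ Hp Hq) Hs).
  assert (E := ode u).
  replace 0 with (2 * y1 u * (u * (1 - u) * y2 u + (/2 - u) * y1 u + INR n ^ 2 * y u)) by (rewrite E; ring).
  replace (2 * y1 u * (u * (1 - u) * y2 u + (/2 - u) * y1 u + INR n ^ 2 * y u)) with
    ((1 * (fct_cte 1 - id)%F u + id u * (0 - 1)) * (y1 * y1)%F u + (id * (fct_cte 1 - id))%F u * (y2 u * y1 u + y1 u * y2 u) +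
     (0 * (y * y)%F u + fct_cte (INR n ^ 2) u * (y1 u * y u + y u * y1 u))).
  exact Ht.
  unfold fct_cte, id, mult_fct, minus_fct. field.
Qed.

Lemma y_at0 : y 0 = 1.
Proof.
  unfold y, Pc. rewrite sum_first. simpl. unfold dn; rewrite dd_0. ring.
  intros s Hs. destruct s. lia. simpl; ring.
Qed.

Lemma y_bound u : 0 <= u <= 1 -> Rabs (y u) <= 1.
Proof.
  intros Hu. destruct (Nat.eq_dec n 0) as [En|En].
  - unfold y. rewrite En. unfold Pc. simpl. unfold dn. rewrite dd_0. rewrite Rmult_1_r, Rabs_R1; lra.
  - assert (HK : Kf u = Kf 0).
    { destruct (Req_dec u 0) as [->|Hu0]. auto.
      destruct (MVT_cor2 Kf (fun _ => 0) 0 u ltac:(lra)) as [c [Hc _]].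
      intros; apply K_deriv. lra. }
    unfold Kf in HK. rewrite y_at0 in HK.
    assert (Hn : 0 < INR n) by (apply lt_0_INR; lia).
    assert (0 <= u * (1 - u) * (y1 u * y1 u)) by (apply Rmult_le_pos; nra).
    assert (H2 : INR n ^ 2 * (y u * y u) <= INR n ^ 2 * 1) by lra.
    assert (y u * y u <= 1) by (apply Rmult_le_reg_l in H2; auto; apply pow_lt; lra).
    rewrite <- Rabs_R1. apply Rsqr_le_abs_0. unfold Rsqr. lra.
Qed.
End Cheb.

Lemma geg0_bound n x : -1 <= x <= 1 -> Rabs (geg n 0 x) <= 1.
Proof.
  intros Hx. rewrite geg0. apply (y_bound n ((1 - x) / 2)). lra.
Qed.

Lemma poly_cont c N x : continuity_pt (poly_eval c N) x.
Proof. apply derivable_continuous_pt. exact (exist _ _ (Pc_deriv c N x)). Qed.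

Lemma RInt_bound f x M : -1 <= x ->
  (forall t, -1 <= t <= x -> continuity_pt f t) ->
  (forall t, -1 <= t <= x -> Rabs (f t) <= M) ->
  Rabs (RInt f (-1) x) <= M * (x + 1).
Proof.
  intros Hx Hc Hb.
  pose (pr := @continuity_implies_RiemannInt f (-1) x Hx Hc).
  assert (E : RInt f (-1) x = RiemannInt pr).
  { unfold RInt.
    destruct (epsilon_spec (inhabits 0) (fun I => exists pr : Riemann_integrable f (-1) x, RiemannInt pr = I)
      (ex_intro _ (RiemannInt pr) (ex_intro _ pr eq_refl))) as [pr' Hp].
    rewrite <- Hp. apply RiemannInt_P5. }
  assert (pr2 : Riemann_integrable (fun t => Rabs (f t)) (-1) x).
  { apply continuity_implies_RiemannInt; auto. intros t Ht.
    apply (continuity_pt_comp f Rabs t); auto. apply Rcontinuity_abs. }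
  assert (pr3 : Riemann_integrable (fct_cte M) (-1) x).
  { apply continuity_implies_RiemannInt; auto. intros t Ht. apply continuity_pt_const. intros a b; reflexivity. }
  rewrite E. eapply Rle_trans. apply (@RiemannInt_P17 f (-1) x pr pr2 Hx).
  eapply Rle_trans. apply (@RiemannInt_P19 _ _ _ _ pr2 pr3 Hx). intros t Ht. unfold fct_cte. apply Hb; lra.
  rewrite RiemannInt_P15. lra.
Qed.

Lemma ln1p_le y : 0 <= y -> ln (1 + y) <= y - y ^ 2 / 2 + y ^ 3 / 3.
Proof.
  intros Hy. destruct (Req_dec y 0) as [->|Hy0].
  replace (1 + 0) with 1 by ring. rewrite ln_1. simpl; lra.
  set (phi := fun t => t - / 2 * t ^ 2 + / 3 * t ^ 3 - ln (1 + t)).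
  assert (Hd : forall c, 0 <= c <= y -> derivable_pt_lim phi c (c ^ 3 / (1 + c))).
  { intros c Hc.
    assert (H1 := derivable_pt_lim_plus (fct_cte 1) id c 0 1 (derivable_pt_lim_const 1 c) (derivable_pt_lim_id c)).
    assert (H2 := derivable_pt_lim_ln ((fct_cte 1 + id)%F c) ltac:(unfold plus_fct, fct_cte, id; lra)).
    assert (H3 := derivable_pt_lim_comp _ _ c _ _ H1 H2).
    assert (H4 := derivable_pt_lim_scal _ (/ 2) c _ (derivable_pt_lim_pow c 2)).
    assert (H5 := derivable_pt_lim_scal _ (/ 3) c _ (derivable_pt_lim_pow c 3)).
    assert (H6 := derivable_pt_lim_minus _ _ c _ _
       (derivable_pt_lim_plus _ _ c _ _ (derivable_pt_lim_minus _ _ c _ _ (derivable_pt_lim_id c) H4) H5) H3).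
    replace (c ^ 3 / (1 + c)) with (1 - / 2 * (INR 2 * c ^ Init.Nat.pred 2) + / 3 * (INR 3 * c ^ Init.Nat.pred 3) -
       / (fct_cte 1 + id)%F c * (0 + 1)).
    exact H6. unfold plus_fct, fct_cte, id. simpl. field. lra. }
  destruct (MVT_cor2 phi (fun c => c ^ 3 / (1 + c)) 0 y ltac:(lra) Hd) as [c [Hc Hc2]].
  assert (0 <= c ^ 3 / (1 + c) * (y - 0)).
  { apply Rmult_le_pos; [|lra]. unfold Rdiv; apply Rmult_le_pos; [apply pow_le; lra| left; apply Rinv_0_lt_compat; lra]. }
  unfold phi in Hc. replace (1 + 0) with 1 in Hc by ring. rewrite ln_1 in Hc.
  simpl in Hc |- *. lra.
Qed.

Lemma ln_fact_lb m : (1 <= m)%nat ->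
  (INR m + 1/2) * ln (INR m) - INR m + 1/2 + 1 / (2 * INR m) <= ln (INR (fact m)).
Proof.
  intros Hm. induction m. lia. destruct m.
  - simpl. rewrite ln_1. lra.
  - specialize (IHm ltac:(lia)).
    set (k := INR (S m)) in *.
    assert (Hk : 1 <= k) by (unfold k; rewrite S_INR; pose proof (pos_INR m); lra).
    replace (INR (S (S m))) with (k + 1) by (unfold k; rewrite (S_INR (S m)); ring).
    change (fact (S (S m))) with (S (S m) * fact (S m))%nat. rewrite mult_INR.
    replace (INR (S (S m))) with (k + 1) by (unfold k; rewrite (S_INR (S m)); ring).
    rewrite ln_mult by (try apply lt_0_INR, lt_O_fact; lra).
    assert (Hl : ln (k + 1) = ln k + ln (1 + / k)).
    { rewrite <- ln_mult by (try apply Rplus_lt_0_compat; try apply Rinv_0_lt_compat; lra).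
      f_equal. field. lra. }
    assert (Hb := ln1p_le (/ k) ltac:(left; apply Rinv_0_lt_compat; lra)).
    assert (Hc : (k + 1/2) * (/ k - (/ k) ^ 2 / 2 + (/ k) ^ 3 / 3) <= 1 + 1 / (2 * k * (k + 1))).
    { replace ((k + 1/2) * (/ k - (/ k) ^ 2 / 2 + (/ k) ^ 3 / 3)) with (1 + 1 / (12 * k ^ 2) + 1 / (6 * k ^ 3))
        by (field; lra).
      assert (1 / (12 * k ^ 2) + 1 / (6 * k ^ 3) <= 1 / (2 * k * (k + 1))); [|lra].
      replace (1 / (12 * k ^ 2) + 1 / (6 * k ^ 3)) with ((k + 2) / (12 * k ^ 3)) by (field; lra).
      apply (Rmult_le_reg_r (12 * k ^ 3 * (2 * k * (k + 1)))). apply Rmult_lt_0_compat; [|nra]. nra.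
      field_simplify; try nra. }
    assert (Hkk : (k + 1 / 2) * ln (1 + / k) <= 1 + 1 / (2 * k * (k + 1))).
    { eapply Rle_trans; [|exact Hc]. apply Rmult_le_compat_l; lra. }
    rewrite Hl.
    assert (E : 1 / (2 * k) - 1 / (2 * (k + 1)) = 1 / (2 * k * (k + 1))) by (field; lra).
    nra.
Qed.

Lemma exp_INR m : exp (INR m) = exp 1 ^ m.
Proof. induction m. simpl; apply exp_0. rewrite S_INR, exp_plus, IHm. simpl; ring. Qed.

Lemma asym m b : (1 <= m)%nat -> 0 <= b ->
  / (2 ^ m * INR (fact (m + 1))) <= (exp 1 / 2) ^ m * Rpower (INR m) (b - INR m - 3/2).
Proof.
  intros Hm Hb.
  assert (H1 : 1 <= INR m) by (replace 1 with (INR 1) by reflexivity; apply le_INR; lia).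
  assert (Hln : 0 <= ln (INR m)) by (rewrite <- ln_1; apply ln_le_mono; lra).
  assert (Lf := ln_fact_lb m Hm).
  assert (F1 : exp ((INR m + 1/2) * ln (INR m) - INR m) <= INR (fact m)).
  { rewrite <- (exp_ln (INR (fact m))) by (apply lt_0_INR, lt_O_fact).
    apply exp_le_mono. assert (0 < 1 / (2 * INR m)) by (apply Rdiv_lt_0_compat; lra). lra. }
  assert (F2 : exp ((INR m + 3/2) * ln (INR m) - INR m) <= INR (fact (m + 1))).
  { rewrite Nat.add_1_r. change (fact (S m)) with (S m * fact m)%nat. rewrite mult_INR, S_INR.
    replace ((INR m + 3/2) * ln (INR m) - INR m) with (ln (INR m) + ((INR m + 1/2) * ln (INR m) - INR m)) by field.
    rewrite exp_plus, exp_ln by lra. apply Rmult_le_compat; try lra. left; apply exp_pos. }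
  assert (P2 : 0 < 2 ^ m) by (apply pow_lt; lra).
  apply Rle_trans with (/ (2 ^ m * exp ((INR m + 3/2) * ln (INR m) - INR m))).
  apply Rinv_le_contravar. apply Rmult_lt_0_compat; auto; apply exp_pos.
  apply Rmult_le_compat_l; lra.
  unfold Rdiv. rewrite Rpow_mult_distr, <- exp_INR, pow_inv. unfold Rpower.
  rewrite Rinv_mult, <- exp_Ropp.
  replace (- ((INR m + 3 * / 2) * ln (INR m) - INR m)) with (INR m + (- INR m - 3 * / 2) * ln (INR m)) by field.
  transitivity (exp (INR m) * / 2 ^ m * exp ((- INR m - 3 * / 2) * ln (INR m))). rewrite exp_plus; right; ring.
  apply Rmult_le_compat_l. apply Rmult_le_pos; [left; apply exp_pos| left; apply Rinv_0_lt_compat; lra].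
  apply exp_le_mono. apply Rmult_le_compat_r; lra.
Qed.

Lemma main_bound m A f fd x astar zeta :
  admissible m A f fd x astar -> -1 <= zeta <= 1 ->
  Rabs (trunc_err m astar (fd (S m)) x zeta) <= A * (x + 1) / (2 ^ m * INR (fact (m + 1))).
Proof.
  intros [HA [_ [_ [_ [Hbd [Hx [Ha Hmin]]]]]]] Hz.
  assert (HK : geg_lead (m + 1) 0 = 2 ^ m).
  { pose proof (geg0_lead (m + 1) ltac:(lia)) as H. rewrite Nat.add_1_r in *. simpl pow in H. lra. }
  assert (He0 : eta m 0 x = RInt (geg (m + 1) 0) (-1) x).
  { unfold eta. rewrite HK. field. apply pow_nonzero; lra. }
  assert (Hb0 : Rabs (eta m 0 x) <= 1 * (x + 1)).
  { rewrite He0. apply RInt_bound. lra.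
    intros t _. exact (poly_cont _ _ t).
    intros t Ht. apply geg0_bound. lra. }
  assert (Hea : Rabs (eta m astar x) <= x + 1).
  { specialize (Hmin 0 ltac:(lra)). rewrite <- !Rsqr_pow2 in Hmin.
    apply Rsqr_le_abs_0 in Hmin. lra. }
  assert (P2 : 0 < 2 ^ m * INR (fact (m + 1))).
  { apply Rmult_lt_0_compat. apply pow_lt; lra. apply lt_0_INR, lt_O_fact. }
  unfold trunc_err. rewrite Rabs_mult. unfold Rdiv. rewrite Rabs_mult, Rabs_inv, (Rabs_right (2 ^ m * _)) by lra.
  replace (A * (x + 1) * / (2 ^ m * INR (fact (m + 1)))) with (A * / (2 ^ m * INR (fact (m + 1))) * (x + 1)) by ring.
  apply Rmult_le_compat; try apply Rabs_pos.
  apply Rmult_le_pos; [apply Rabs_pos| left; apply Rinv_0_lt_compat; lra].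
  apply Rmult_le_compat_r. left; apply Rinv_0_lt_compat; lra. apply Hbd; auto. auto.
Qed.

Lemma le_mul_ge1 B r : 0 <= B -> 1 <= r -> B <= B * r.
Proof. intros; rewrite <- (Rmult_1_r B) at 1; apply Rmult_le_compat_l; lra. Qed.

Lemma ratio_ge1' p q : 0 < p -> p <= q -> 1 <= q / p.
Proof. intros. apply (Rmult_le_reg_r p); auto. unfold Rdiv; rewrite Rmult_assoc, Rinv_l; lra. Qed.

Lemma part_i m A x a : 0 < A -> -1 <= x -> 0 <= a ->
  A * (x + 1) / (2 ^ m * INR (fact (m + 1))) <=
  A / 2 ^ m * (x + 1) * Gamma (a + 1) * Gamma (INR m + 2 * a + 1)
  / (Gamma (2 * a + 1) * Gamma (INR m + 2) * Gamma (INR m + a + 1)).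
Proof.
  intros HA Hx Ha.
  replace (INR m + 2 * a + 1) with ((2 * a + 1) + INR m) by ring.
  replace (INR m + 2) with (1 + INR (m + 1)) by (rewrite plus_INR; simpl; ring).
  replace (INR m + a + 1) with ((a + 1) + INR m) by ring.
  rewrite !Gamma_poch, Gamma_1, poch_one by lra.
  pose proof (Gamma_pos (a + 1) ltac:(lra)). pose proof (Gamma_pos (2 * a + 1) ltac:(lra)).
  pose proof (poch_pos (a + 1) m ltac:(lra)). pose proof (poch_mono (a + 1) (2 * a + 1) m ltac:(lra) ltac:(lra)).
  pose proof (INR_fact_neq_0 (m + 1)). assert (0 < 2 ^ m) by (apply pow_lt; lra).
  replace (A / 2 ^ m * (x + 1) * Gamma (a + 1) * (poch (2 * a + 1) m * Gamma (2 * a + 1)) /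
    (Gamma (2 * a + 1) * (INR (fact (m + 1)) * 1) * (poch (a + 1) m * Gamma (a + 1))))
    with (A * (x + 1) / (2 ^ m * INR (fact (m + 1))) * (poch (2 * a + 1) m / poch (a + 1) m))
    by (field; repeat split; lra).
  apply le_mul_ge1. apply Rdiv_le_0_compat || (unfold Rdiv; apply Rmult_le_pos; [nra|]).
  left; apply Rinv_0_lt_compat; apply Rmult_lt_0_compat; auto; apply lt_0_INR, lt_O_fact.
  apply ratio_ge1'; lra.
Qed.

Lemma part_ii j A x a : 0 < A -> -1 <= x -> -1/2 < a < 0 ->
  let m := (2 * j + 1)%nat in
  A * (x + 1) / (2 ^ m * INR (fact (m + 1))) <=
  A / 2 ^ (m + 1) * (x + 1) * Gamma a / Gamma (INR m + a + 1)
  * binomR ((INR m - 1) / 2 + a) ((INR m + 1) / 2).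
Proof.
  intros HA Hx Ha m. unfold binomR.
  assert (Hm : INR m = 2 * INR j + 1) by (unfold m; rewrite plus_INR, mult_INR; simpl; ring).
  replace ((INR m - 1) / 2 + a + 1) with ((a + 1) + INR j) by (rewrite Hm; field).
  replace ((INR m + 1) / 2 + 1) with (1 + INR (S j)) by (rewrite Hm, S_INR; field).
  replace ((INR m - 1) / 2 + a - (INR m + 1) / 2 + 1) with a by (rewrite Hm; field).
  replace (INR m + a + 1) with ((a + 1) + INR m) by ring.
  rewrite !Gamma_poch, Gamma_1, poch_one by lra.
  rewrite (Gamma_neg a) by lra.
  pose proof (Gamma_pos (a + 1) ltac:(lra)).
  set (Pj := poch (a + 1) j). set (Pm := poch (a + 1) m).
  set (F := INR (fact (m + 1))). set (Fj := INR (fact (S j))).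
  assert (HPj : 0 < Pj) by (apply poch_pos; lra).
  assert (HPm : 0 < Pm) by (apply poch_pos; lra).
  assert (HF : 0 < F) by (apply lt_0_INR, lt_O_fact).
  assert (HFj : 0 < Fj) by (apply lt_0_INR, lt_O_fact).
  assert (P2 : 0 < 2 ^ m) by (apply pow_lt; lra).
  rewrite pow_add, pow_1.
  replace (A / (2 ^ m * 2) * (x + 1) * (Gamma (a + 1) / a) / (Pm * Gamma (a + 1)) *
     (Pj * Gamma (a + 1) / (Fj * 1 * (Gamma (a + 1) / a))))
    with (A * (x + 1) / (2 ^ m * F) * (F * Pj / (2 * Fj * Pm))) by (field; repeat split; lra).
  apply le_mul_ge1. unfold Rdiv; apply Rmult_le_pos; [nra|]. left; apply Rinv_0_lt_compat; nra.
  apply ratio_ge1'. nra.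
  set (Q := poch (1 + INR j) (S j)).
  assert (HQ : 0 < Q) by (apply poch_pos; pose proof (pos_INR j); lra).
  assert (E1 : Pm = Pj * poch (a + 1 + INR j) (S j)) by (unfold Pm, Pj, m; rewrite <- poch_add; f_equal; lia).
  assert (E2 : poch (a + 1 + INR j) (S j) <= Q) by (apply poch_mono; pose proof (pos_INR j); lra).
  assert (E3 : INR (fact (2 * j + 1)) = INR (fact j) * Q).
  { rewrite <- !poch_one. unfold Q. rewrite <- poch_add. f_equal. lia. }
  assert (E4 : F = (2 * INR j + 2) * INR (fact (2 * j + 1))).
  { unfold F, m. replace (2 * j + 1 + 1)%nat with (S (2 * j + 1)) by lia.
    change (fact (S (2 * j + 1))) with (S (2 * j + 1) * fact (2 * j + 1))%nat.
    rewrite mult_INR, S_INR, plus_INR, mult_INR. simpl. ring. }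
  assert (E5 : Fj = (INR j + 1) * INR (fact j)).
  { unfold Fj. change (fact (S j)) with (S j * fact j)%nat. rewrite mult_INR, S_INR. ring. }
  rewrite E1, E4, E3, E5.
  assert (0 < INR (fact j)) by (apply lt_0_INR, lt_O_fact).
  assert (0 <= INR j) by apply pos_INR.
  assert (0 <= poch (a + 1 + INR j) (S j)) by (left; apply poch_pos; lra).
  replace ((2 * INR j + 2) * (INR (fact j) * Q) * Pj) with (2 * ((INR j + 1) * INR (fact j)) * (Pj * Q)) by ring.
  apply Rmult_le_compat_l. nra. apply Rmult_le_compat_l; lra.
Qed.

Lemma part_iii j A x a : 0 < A -> -1 <= x -> -1/2 < a < 0 ->
  let m := (2 * j)%nat in
  A * (x + 1) / (2 ^ m * INR (fact (m + 1))) <=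
  A / 2 ^ m * (x + 1) * Gamma (a + 1)
  / (sqrt ((INR m + 1) * (2 * a + INR m + 1)) * Gamma (INR m + a + 1))
  * binomR (INR m / 2 + a) (INR m / 2).
Proof.
  intros HA Hx Ha m. unfold binomR.
  assert (Hm : INR m = 2 * INR j) by (unfold m; rewrite mult_INR; simpl; ring).
  replace (INR m / 2 + a + 1) with ((a + 1) + INR j) by (rewrite Hm; field).
  replace (INR m / 2 + 1) with (1 + INR j) by (rewrite Hm; field).
  replace (INR m / 2 + a - INR m / 2 + 1) with (a + 1) by field.
  replace (INR m + a + 1) with ((a + 1) + INR m) by ring.
  rewrite !Gamma_poch, Gamma_1, poch_one by lra.
  pose proof (Gamma_pos (a + 1) ltac:(lra)).
  set (Sq := sqrt ((INR m + 1) * (2 * a + INR m + 1))).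
  assert (HS : 0 < Sq) by (apply sqrt_lt_R0; pose proof (pos_INR m); nra).
  assert (HS2 : Sq <= 2 * INR j + 1).
  { unfold Sq. rewrite <- (sqrt_square (2 * INR j + 1)) by (pose proof (pos_INR j); lra).
    apply sqrt_le_1_alt. rewrite Hm. pose proof (pos_INR j); nra. }
  set (Pj := poch (a + 1) j). set (Pm := poch (a + 1) m).
  set (F := INR (fact (m + 1))). set (Fj := INR (fact j)).
  assert (HPj : 0 < Pj) by (apply poch_pos; lra).
  assert (HPm : 0 < Pm) by (apply poch_pos; lra).
  assert (HF : 0 < F) by (apply lt_0_INR, lt_O_fact).
  assert (HFj : 0 < Fj) by (apply lt_0_INR, lt_O_fact).
  assert (P2 : 0 < 2 ^ m) by (apply pow_lt; lra).
  replace (A / 2 ^ m * (x + 1) * Gamma (a + 1) / (Sq * (Pm * Gamma (a + 1))) *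
     (Pj * Gamma (a + 1) / (Fj * 1 * Gamma (a + 1))))
    with (A * (x + 1) / (2 ^ m * F) * (F * Pj / (Sq * Pm * Fj))) by (field; repeat split; lra).
  apply le_mul_ge1. unfold Rdiv; apply Rmult_le_pos; [nra|]. left; apply Rinv_0_lt_compat; nra.
  apply ratio_ge1'. apply Rmult_lt_0_compat; [|lra]. apply Rmult_lt_0_compat; lra.
  set (Q := poch (1 + INR j) j).
  assert (HQ : 0 < Q) by (apply poch_pos; pose proof (pos_INR j); lra).
  assert (E1 : Pm = Pj * poch (a + 1 + INR j) j) by (unfold Pm, Pj, m; rewrite <- poch_add; f_equal; lia).
  assert (E2 : poch (a + 1 + INR j) j <= Q) by (apply poch_mono; pose proof (pos_INR j); lra).
  assert (E3 : INR (fact (2 * j)) = Fj * Q).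
  { unfold Fj, Q. rewrite <- !poch_one. rewrite <- poch_add. f_equal. lia. }
  assert (E4 : F = (2 * INR j + 1) * INR (fact (2 * j))).
  { unfold F, m. rewrite Nat.add_1_r.
    change (fact (S (2 * j))) with (S (2 * j) * fact (2 * j))%nat.
    rewrite mult_INR, S_INR, mult_INR. simpl. ring. }
  rewrite E1, E4, E3.
  assert (0 <= INR j) by apply pos_INR.
  assert (0 <= poch (a + 1 + INR j) j) by (left; apply poch_pos; lra).
  replace ((2 * INR j + 1) * (Fj * Q) * Pj) with ((2 * INR j + 1) * ((Pj * Q) * Fj)) by ring.
  replace (Sq * (Pj * poch (a + 1 + INR j) j) * Fj) with (Sq * ((Pj * poch (a + 1 + INR j) j) * Fj)) by ring.
  apply Rmult_le_compat; try lra. apply Rmult_le_pos; [apply Rmult_le_pos|]; lra.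
  apply Rmult_le_compat_r; [lra|]. apply Rmult_le_compat_l; lra.
Qed.

Lemma asym_final m A x b eps : (1 <= m)%nat -> 0 <= b -> 0 < A -> -1 <= x -> 0 < eps ->
  A * (x + 1) / (2 ^ m * INR (fact (m + 1))) <=
  (1 + eps) * (A * 1) * (exp 1 / 2) ^ m * (x + 1) * Rpower (INR m) (b - INR m - 3/2).
Proof.
  intros Hm Hb HA Hx He. pose proof (asym m b Hm Hb) as H.
  set (Y := (exp 1 / 2) ^ m * Rpower (INR m) (b - INR m - 3/2)) in *.
  assert (HY : 0 < Y).
  { unfold Y. apply Rmult_lt_0_compat. apply pow_lt. pose proof (exp_pos 1); lra. unfold Rpower; apply exp_pos. }
  assert (HAx : 0 <= A * (x + 1)) by (apply Rmult_le_pos; lra).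
  replace ((1 + eps) * (A * 1) * (exp 1 / 2) ^ m * (x + 1) * Rpower (INR m) (b - INR m - 3 / 2))
    with ((1 + eps) * (A * (x + 1) * Y)) by (unfold Y; ring).
  assert (H1 : A * (x + 1) / (2 ^ m * INR (fact (m + 1))) <= A * (x + 1) * Y).
  { unfold Rdiv. apply Rmult_le_compat_l; auto. }
  assert (0 <= eps * (A * (x + 1) * Y)) by (apply Rmult_le_pos; [lra|]; apply Rmult_le_pos; lra).
  lra.
Qed.

Theorem theorem7 :
  exists D1 D2 : R -> R,
    (forall a, -1/2 < a -> 0 < D1 a /\ 0 < D2 a) /\
    (* non-asymptotic bounds (i), (ii), (iii) *)
    (forall (m : nat) (A : R) (f : R -> R) (fd : nat -> R -> R) (x astar zeta : R),
       admissible m A f fd x astar -> -1 <= zeta <= 1 ->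
       (0 <= astar ->
          Rabs (trunc_err m astar (fd (S m)) x zeta) <=
          A / 2 ^ m * (x + 1) * Gamma (astar + 1) * Gamma (INR m + 2 * astar + 1)
          / (Gamma (2 * astar + 1) * Gamma (INR m + 2) * Gamma (INR m + astar + 1))) /\
       (Nat.odd m = true -> -1/2 < astar < 0 ->
          Rabs (trunc_err m astar (fd (S m)) x zeta) <=
          A / 2 ^ (m + 1) * (x + 1) * Gamma astar / Gamma (INR m + astar + 1)
          * binomR ((INR m - 1) / 2 + astar) ((INR m + 1) / 2)) /\
       (Nat.even m = true -> -1/2 < astar < 0 ->
          Rabs (trunc_err m astar (fd (S m)) x zeta) <=
          A / 2 ^ m * (x + 1) * Gamma (astar + 1)
          / (sqrt ((INR m + 1) * (2 * astar + INR m + 1)) * Gamma (INR m + astar + 1))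
          * binomR (INR m / 2 + astar) (INR m / 2))) /\
    (* asymptotic bound, case astar >= 0 *)
    (forall a, 0 <= a -> forall eps, 0 < eps -> exists N : nat,
       forall (m : nat) (A : R) (f : R -> R) (fd : nat -> R -> R) (x zeta : R),
         (N <= m)%nat -> admissible m A f fd x a -> -1 <= zeta <= 1 ->
         Rabs (trunc_err m a (fd (S m)) x zeta) <=
         (1 + eps) * (A * D1 a) * (exp 1 / 2) ^ m * (x + 1)
           * Rpower (INR m) (a - INR m - 3/2)) /\
    (* asymptotic bound, case -1/2 < astar < 0 *)
    (forall a, -1/2 < a < 0 -> forall eps, 0 < eps -> exists N : nat,
       forall (m : nat) (A : R) (f : R -> R) (fd : nat -> R -> R) (x zeta : R),
         (N <= m)%nat -> admissible m A f fd x a -> -1 <= zeta <= 1 ->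
         Rabs (trunc_err m a (fd (S m)) x zeta) <=
         (1 + eps) * ((A * D1 a) * D2 a) * (exp 1 / 2) ^ m * (x + 1)
           * Rpower (INR m) (- INR m - 3/2)).
Proof.
  exists (fun _ => 1), (fun _ => 1). split; [intros; lra|]. split; [|split].
  - intros m A f fd x astar zeta Hadm Hz.
    pose proof (main_bound m A f fd x astar zeta Hadm Hz) as Hmb.
    destruct Hadm as (HA & _ & _ & _ & _ & Hx & Ha & _).
    split; [|split].
    + intros Ha0. eapply Rle_trans; [exact Hmb|]. apply part_i; lra.
    + intros Hodd Ha'. apply Nat.odd_spec in Hodd. destruct Hodd as [j ->].
      eapply Rle_trans; [exact Hmb|]. exact (part_ii j A x astar HA ltac:(lra) Ha').
    + intros Hev Ha'. apply Nat.even_spec in Hev. destruct Hev as [j ->].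
      eapply Rle_trans; [exact Hmb|]. exact (part_iii j A x astar HA ltac:(lra) Ha').
  - intros a Ha eps Heps. exists 1%nat. intros m A f fd x zeta Hm Hadm Hz.
    pose proof (main_bound m A f fd x a zeta Hadm Hz) as Hmb.
    destruct Hadm as (HA & _ & _ & _ & _ & Hx & _ & _).
    eapply Rle_trans; [exact Hmb|]. apply asym_final; auto; lra.
  - intros a Ha eps Heps. exists 1%nat. intros m A f fd x zeta Hm Hadm Hz.
    pose proof (main_bound m A f fd x a zeta Hadm Hz) as Hmb.
    destruct Hadm as (HA & _ & _ & _ & _ & Hx & _ & _).
    eapply Rle_trans; [exact Hmb|].
    replace ((1 + eps) * (A * 1 * 1)) with ((1 + eps) * (A * 1)) by ring.
    replace (- INR m - 3/2) with (0 - INR m - 3/2) by ring.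
    apply asym_final; auto; lra.
Qed.
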